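(* The function $\Phi(M^1,\dots,M^n)=\sum_{p\in N}2|M^p|+|M^I(M^1,\dots,M^n)|$ is in general not a potential function for the #-KEG with more than two players: there exist a 3-player #-KEG instance, a deterministic maximum-cardinality IA algorithm $\mathcal{A}$, and a sequence of unilateral deviations of one player, each strictly increasing that player's utility, along which $\Phi$ does not strictly increase at every step.
   Context: The #-KEG: players $N=\{1,\dots,n\}$; player $p$ has internal graph $G^p=(V^p,E^p)$ (pairwise disjoint vertex sets); $E^I$ is a set of external edges each joining vertices of two different players; $G=(V,E)$ with $V=\bigcup_pV^p$, $E=E^I\cup\bigcup_pE^p$. A strategy of player $p$ is a matching $M^p$ of $G^p$; the IA selects, via a deterministic algorithm $\mathcal{A}$, a maximum-cardinality matching $M^I(M^1,\dots,M^n)$ of the external edges whose endpoints are uncovered by $\bigcup_pM^p$. Player $p$'s utility is $2|M^p|+|M^I_p|$, where $M^I_p$ is the set of edges of $M^I$ incident to $V^p$. A function $\Phi$ on strategy profiles is a potential function if its value strictly increases whenever a player unilaterally switches to a strategy that strictly increases her utility. *)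

(* Defs.v *)
From mathcomp Require Import all_boot.
Set Implicit Arguments. Unset Strict Implicit. Unset Printing Implicit Defensive.

(* A #-KEG instance: players 'I_n, vertex type V (finite), owner v = the player
   whose internal graph contains v (so the V^p are pairwise disjoint),
   edge set E : a set of 2-element vertex sets. *)

Definition simple_edges (V : finType) (E : {set {set V}}) : Prop :=
  forall e, e \in E -> #|e| = 2.

Definition internal_edges (n : nat) (V : finType) (owner : V -> 'I_n)
  (E : {set {set V}}) (p : 'I_n) : {set {set V}} :=
  [set e in E | [forall v in e, owner v == p]].

Definition external_edges (n : nat) (V : finType) (owner : V -> 'I_n)
  (E : {set {set V}}) : {set {set V}} :=
  [set e in E | [exists u in e, exists v in e, owner u != owner v]].

Definition is_matching (V : finType) (M : {set {set V}}) : Prop :=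
  forall e f, e \in M -> f \in M -> e != f -> [disjoint e & f].

Definition is_strategy (n : nat) (V : finType) (owner : V -> 'I_n)
  (E : {set {set V}}) (p : 'I_n) (M : {set {set V}}) : Prop :=
  M \subset internal_edges owner E p /\ is_matching M.

Definition profile (n : nat) (V : finType) := 'I_n -> {set {set V}}.

Definition valid_profile (n : nat) (V : finType) (owner : V -> 'I_n)
  (E : {set {set V}}) (S : profile n V) : Prop :=
  forall p, is_strategy owner E p (S p).

Definition covered (n : nat) (V : finType) (S : profile n V) : {set V} :=
  \bigcup_(p < n) \bigcup_(e in S p) e.

Definition available_edges (n : nat) (V : finType) (owner : V -> 'I_n)
  (E : {set {set V}}) (S : profile n V) : {set {set V}} :=
  [set e in external_edges owner E | [disjoint e & covered S]].

Definition valid_IA (n : nat) (V : finType) (owner : V -> 'I_n)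
  (E : {set {set V}}) (A : profile n V -> {set {set V}}) : Prop :=
  forall S, valid_profile owner E S ->
    [/\ A S \subset available_edges owner E S, is_matching (A S) &
        forall M : {set {set V}}, M \subset available_edges owner E S -> is_matching M ->
          #|M| <= #|A S| ].

Definition utility (n : nat) (V : finType) (owner : V -> 'I_n)
  (A : profile n V -> {set {set V}}) (S : profile n V) (p : 'I_n) : nat :=
  2 * #|S p| + #|[set e in A S | [exists v in e, owner v == p]]|.

Definition Phi (n : nat) (V : finType) (A : profile n V -> {set {set V}})
  (S : profile n V) : nat :=
  \sum_(p < n) 2 * #|S p| + #|A S|.

Definition improving_deviation (n : nat) (V : finType) (owner : V -> 'I_n)
  (E : {set {set V}}) (A : profile n V -> {set {set V}})
  (S S' : profile n V) : Prop :=
  exists p : 'I_n,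
    [/\ is_strategy owner E p (S' p),
        (forall q, q != p -> S' q = S q) &
        utility owner A S p < utility owner A S' p].

(* Main.v *)
Require Import Defs.
From mathcomp Require Import all_boot.
Set Implicit Arguments. Unset Strict Implicit. Unset Printing Implicit Defensive.

Definition v0 : 'I_6 := @Ordinal 6 0 isT.
Definition v1 : 'I_6 := @Ordinal 6 1 isT.
Definition v2 : 'I_6 := @Ordinal 6 2 isT.
Definition v3 : 'I_6 := @Ordinal 6 3 isT.
Definition v4 : 'I_6 := @Ordinal 6 4 isT.
Definition v5 : 'I_6 := @Ordinal 6 5 isT.
Definition p0 : 'I_3 := @Ordinal 3 0 isT.
Definition p1 : 'I_3 := @Ordinal 3 1 isT.
Definition p2 : 'I_3 := @Ordinal 3 2 isT.
Definition own (v : 'I_6) : 'I_3 :=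
  if val v == 1 then p1 else if val v == 2 then p2 else p0.
Definition e01 : {set 'I_6} := [set v0; v1].
Definition e12 : {set 'I_6} := [set v1; v2].
Definition e34 : {set 'I_6} := [set v3; v4].
Definition e45 : {set 'I_6} := [set v4; v5].
Definition EE : {set {set 'I_6}} := [set e01; e12; e34; e45].
Definition AA (S : profile 3 'I_6) : {set {set 'I_6}} :=
  if e45 \in S p0 then [set e01] else [set e12].

Lemma ne_set (A B : {set 'I_6}) x : x \in A -> x \notin B -> A != B.
Proof. by move=> HA HB; apply/eqP => E; move: HB; rewrite -E HA. Qed.

Lemma e01_12 : e01 != e12. Proof. by apply: (@ne_set _ _ v0); rewrite !inE. Qed.
Lemma e34_45 : e34 != e45. Proof. by apply: (@ne_set _ _ v3); rewrite !inE. Qed.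
Lemma e45_34 : e45 != e34. Proof. by apply: (@ne_set _ _ v5); rewrite !inE. Qed.

Lemma internal_sub p f : f \in internal_edges own EE p -> (f == e34) || (f == e45).
Proof.
rewrite inE /EE !inE => /andP [].
case/orP => [/orP [/orP [|]|]|] /eqP -> /forallP H; rewrite ?eqxx ?orbT //.
- have := H v0; have := H v1; rewrite !inE !eqxx ?orbT /= => /eqP <- /eqP.
  by rewrite /own /=.
- have := H v1; have := H v2; rewrite !inE !eqxx ?orbT /= => /eqP <- /eqP.
  by rewrite /own /=.
Qed.

Lemma own_int f u : (f == e34) || (f == e45) -> u \in f -> own u = p0.
Proof.
case/orP => /eqP ->; rewrite !inE => /orP [] /eqP ->; reflexivity.
Qed.

Lemma disj_int a f : (a == e01) || (a == e12) -> (f == e34) || (f == e45) ->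
  [disjoint a & f].
Proof.
move=> Ha Hf; apply/pred0P => v /=; apply/negbTE/negP => /andP [Hva Hvf].
by move: Hva Hvf; case/orP: Ha => /eqP ->; case/orP: Hf => /eqP ->; rewrite !inE => /orP [] /eqP ->.
Qed.

Lemma avail S : valid_profile own EE S ->
  available_edges own EE S = [set e01; e12].
Proof.
move=> HS.
have Hd : forall a, (a == e01) || (a == e12) -> [disjoint a & covered S].
  move=> a Ha; apply/pred0P => v /=.
  apply/negbTE/negP => /andP [Hva] /bigcupP [p _] /bigcupP [f Hf Hv].
  have [Hsub _] := HS p.
  have := disj_int Ha (internal_sub (subsetP Hsub f Hf)).
  by move/pred0P/(_ v); rewrite /= Hva Hv.
apply/setP => e; rewrite /available_edges /external_edges !inE /EE ?inE.
case: (boolP (e == e01)) => [/eqP ->|n1].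
  rewrite /=; apply/andP; split; last by apply: Hd; rewrite eqxx.
  apply/existsP; exists v0; rewrite !inE eqxx /=.
  by apply/existsP; exists v1; rewrite !inE eqxx orbT /= /own.
case: (boolP (e == e12)) => [/eqP ->|n2].
  rewrite ?eqxx ?orbT /=; apply/andP; split; last by apply: Hd; rewrite eqxx orbT.
  apply/existsP; exists v1; rewrite !inE eqxx /=.
  by apply/existsP; exists v2; rewrite !inE eqxx orbT /= /own.
rewrite /= -!andbA; apply/negbTE/negP => /andP [He /andP [/existsP [u /andP [Hu /existsP [w /andP [Hw Hne]]]] _]].
by move: Hne; rewrite (own_int He Hu) (own_int He Hw).
Qed.

Lemma match1 (a : {set 'I_6}) : is_matching [set a].
Proof. by move=> e f; rewrite !inE => /eqP -> /eqP ->; rewrite eqxx. Qed.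

Lemma card_filter1 (a : {set 'I_6}) (P : pred {set 'I_6}) :
  #|[set e in [set a] | P e]| = P a.
Proof.
case: (boolP (P a)) => H.
  rewrite (_ : [set e in [set a] | P e] = [set a]) ?cards1 //; apply/setP => e; rewrite !inE.
  by case: eqP => // ->; rewrite H.
rewrite (_ : [set e in [set a] | P e] = set0) ?cards0 //; apply/setP => e; rewrite !inE.
by case: eqP => // ->; rewrite (negbTE H).
Qed.

Lemma validIA : valid_IA own EE AA.
Proof.
move=> S HS; rewrite avail //; split.
- by rewrite /AA; case: ifP => _; apply/subsetP => x; rewrite !inE => ->; rewrite ?orbT.
- by rewrite /AA; case: ifP => _; apply: match1.
- move=> M HM HmM.
  have -> : #|AA S| = 1 by rewrite /AA; case: ifP => _; rewrite cards1.
  case: (boolP (e01 \in M)) => H1.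
    have H2 : e12 \notin M.
      apply/negP => H2; have := HmM _ _ H1 H2 e01_12.
      by move/pred0P/(_ v1); rewrite /= !inE.
    suff: M \subset [set e01] by move/subset_leq_card; rewrite cards1.
    apply/subsetP => x Hx.
    have := subsetP HM x Hx; rewrite !inE => /orP [] // /eqP Ex.
    by move: Hx; rewrite Ex (negbTE H2).
  suff: M \subset [set e12] by move/subset_leq_card; rewrite cards1.
    apply/subsetP => x Hx.
  have := subsetP HM x Hx; rewrite !inE => /orP [] // /eqP Ex.
  by move: Hx; rewrite Ex (negbTE H1).
Qed.

Definition prof (a : {set 'I_6}) : profile 3 'I_6 :=
  fun p => if p == p0 then [set a] else set0.

Lemma strat (a : {set 'I_6}) : (a == e34) || (a == e45) ->
  is_strategy own EE p0 [set a].
Proof.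
move=> Ha; split; last exact: match1.
apply/subsetP => x; rewrite inE => /eqP ->; rewrite inE; apply/andP; split.
  by rewrite /EE !inE; case/orP: Ha => ->; rewrite ?orbT.
apply/forallP => v; apply/implyP => Hv; apply/eqP; exact: own_int Ha Hv.
Qed.

Lemma valid_prof a : (a == e34) || (a == e45) -> valid_profile own EE (prof a).
Proof.
move=> Ha p; rewrite /prof; case: eqP => [->|_]; first exact: strat.
split; first exact: sub0set.
by move=> e f; rewrite inE.
Qed.

Theorem mainTheorem5 :
  exists (V : finType) (owner : V -> 'I_3) (E : {set {set V}})
         (A : profile 3 V -> {set {set V}}),
    [/\ simple_edges E, valid_IA owner E A &
      exists (k : nat) (S : nat -> profile 3 V),
        [/\ 0 < k, valid_profile owner E (S 0),
            (forall i, i < k -> improving_deviation owner E A (S i) (S i.+1)) &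
            exists2 i, i < k & ~ (Phi A (S i) < Phi A (S i.+1))]].
Proof.
exists (ordinal 6), own, EE, AA; split.
- move=> e; rewrite /EE !inE => /orP [/orP [/orP [|]|]|] /eqP ->;
  by rewrite cards2.
- exact: validIA.
have AA1 : AA (prof e34) = [set e12].
  by rewrite /AA /prof eqxx inE (negbTE e45_34).
have AA2 : AA (prof e45) = [set e01].
  by rewrite /AA /prof eqxx inE eqxx.
exists 1, (fun i => if i == 0 then prof e34 else prof e45); split => //.
- by apply: valid_prof; rewrite eqxx.
- case=> // _; exists p0; split => /=.
  + by apply: strat; rewrite eqxx orbT.
  + by move=> q Hq; rewrite /prof (negbTE Hq).
  + rewrite /utility AA1 AA2 !card_filter1 /prof eqxx !cards1.
    have -> : [exists v in e12, own v == p0] = false.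
      apply/negbTE/negP => /existsP [v /andP []]; rewrite !inE.
      by case/orP => /eqP ->.
    have -> : [exists v in e01, own v == p0] = true.
      by apply/existsP; exists v0; rewrite !inE eqxx.
    by [].
- exists 0 => //=.
  rewrite /Phi AA1 AA2 !cards1 !big_ord_recr big_ord0 /= /prof /=.
  by rewrite big_ord0 !cards0 !cards1.
Qed.
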